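(* Let $\mathbb F_q$ be a finite field of characteristic $p$, and let $(G_i,S_i)_i$ be a sequence where each $G_i$ is a finite abelian group with $p\nmid|G_i|$, and $S_i\subset\widehat{G_i}$ is a subset of the $\overline{\mathbb F}_q^\times$-valued character group which is Galois-stable: if $\chi\in S_i$ then $\chi^\sigma\in S_i$ for all $\sigma\in\mathrm{Gal}(\overline{\mathbb F}_q/\mathbb F_q)$. Let $\widehat{H_{S_i}}\subset\widehat{G_i}$ be the subgroup generated by $S_i$. Suppose $|G_i|\to\infty$ and there is $0<\delta<1$ with $|\widehat{H_{S_i}}|\gg|G_i|^\delta$. Then for every $\epsilon>0$, $|S_i|\gg_\epsilon(\ln|G_i|)^{1-\epsilon}$. *)

(* Defs.v *)
From Stdlib Require Import Reals.
From HB Require Import structures.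
From mathcomp Require Import all_boot all_order all_algebra all_fingroup.
Set Implicit Arguments. Unset Strict Implicit. Unset Printing Implicit Defensive.
Import GRing.Theory.
Local Open Scope ring_scope.

Section Characters.
Variables (K : fieldType) (gT : finGroupType).

Definition is_character (chi : {ffun gT -> K}) : Prop :=
  (forall x, chi x != 0) /\ (forall x y : gT, chi (x * y)%g = chi x * chi y).

Definition char_one : {ffun gT -> K} := [ffun _ => 1].
Definition char_mul (a b : {ffun gT -> K}) : {ffun gT -> K} := [ffun x => a x * b x].
Definition char_inv (a : {ffun gT -> K}) : {ffun gT -> K} := [ffun x => (a x)^-1].

Definition in_gen_subgroup (S : seq {ffun gT -> K}) (chi : {ffun gT -> K}) : Prop :=
  forall H : {ffun gT -> K} -> Prop,
    H char_one ->
    (forall a b, H a -> H b -> H (char_mul a b)) ->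
    (forall a, H a -> H (char_inv a)) ->
    (forall s, s \in S -> H s) ->
    H chi.

(* S is stable under every field automorphism of K fixing F_q = {x | x^q = x}. *)
Definition galois_stable (q : nat) (S : seq {ffun gT -> K}) : Prop :=
  forall sigma : {rmorphism K -> K},
    bijective sigma ->
    (forall x : K, x ^+ q = x -> sigma x = x) ->
    forall chi, chi \in S -> [ffun x => sigma (chi x)] \in S.

End Characters.

(* Main.v *)
Require Import Defs.
From Stdlib Require Import Reals.
From HB Require Import structures.
From mathcomp Require Import all_boot all_order all_algebra all_fingroup cyclic.
From mathcomp Require Import zify.
From Stdlib Require Import Lia Lra.
Set Implicit Arguments. Unset Strict Implicit. Unset Printing Implicit Defensive.
Import GRing.Theory.
Local Open Scope ring_scope.

Section QF.
Variables (K : fieldType) (p k : nat).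
Hypotheses (pp : prime p) (chRp : p \in [pchar K]).
Definition qfrob of prime p & p \in [pchar K] := fun x : K => x ^+ (p ^ k).
Lemma qfrob_nmod : nmod_morphism (qfrob pp chRp).
Proof.
split=> [|x y]; rewrite /qfrob; first by rewrite expr0n gtn_eqF ?expn_gt0 ?prime_gt0.
apply: exprDn_pchar; rewrite pnatX pnatE // chRp //.
Qed.
Lemma qfrob_monoid : monoid_morphism (qfrob pp chRp).
Proof. by split=> [|x y]; rewrite /qfrob ?expr1n // exprMn. Qed.
HB.instance Definition _ := GRing.isNmodMorphism.Build K K (qfrob pp chRp) qfrob_nmod.
HB.instance Definition _ := GRing.isMonoidMorphism.Build K K (qfrob pp chRp) qfrob_monoid.
End QF.

Section Comb.
Variables (K : fieldType) (gT : finGroupType) (q : nat) (S : seq {ffun gT -> K}).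
Hypotheses (q_gt1 : (1 < q)%N) (Schar : forall s, s \in S -> is_character s)
  (Sfrob : forall s, s \in S -> [ffun x => s x ^+ q] \in S).

Let n := size S.
Let s (j : 'I_n) : {ffun gT -> K} := nth (char_one K gT) S j.
Definition Pe (e : 'I_n -> nat) : {ffun gT -> K} :=
  [ffun x => \prod_(j < n) (s j x) ^+ e j].

Lemma s_in j : s j \in S.
Proof. exact: mem_nth. Qed.

Lemma frob_idx (j : 'I_n) : exists j' : 'I_n, forall x, s j' x = s j x ^+ q.
Proof.
have H := Sfrob (s_in j).
have Hi : (index [ffun x => s j x ^+ q] S < n)%N by rewrite index_mem.
exists (Ordinal Hi) => x; rewrite /s /= nth_index // ffunE //.
Qed.

Lemma rep m : forall e : 'I_n -> nat, (\sum_j e j <= m)%N ->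
  exists d : {ffun 'I_n -> 'I_q}, Pe e = Pe (fun j => val (d j)).
Proof.
elim: m => [|m IH] e He.
  have Hl j : (e j < q)%N.
    have : (e j <= \sum_i e i)%N by rewrite (bigD1 j) //= leq_addr.
    by move: He; rewrite leqn0 => /eqP -> ; rewrite leqn0 => /eqP ->; apply: ltnW.
  by exists [ffun j => Ordinal (Hl j)]; apply/ffunP => x; rewrite !ffunE; apply: eq_bigr => j _; rewrite ffunE.
case: (pickP (fun j => (q <= e j)%N)) => [j Hj | Hn]; last first.
  have Hl j : (e j < q)%N by rewrite ltnNge Hn.
  by exists [ffun j => Ordinal (Hl j)]; apply/ffunP => x; rewrite !ffunE; apply: eq_bigr => i _; rewrite ffunE.
have [j' Hj'] := frob_idx j.
pose e' := fun i : 'I_n => ((if i == j then e i - q else e i) + (i == j'))%N.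
have E1 : (\sum_i e i = e j + \sum_(i | i != j) e i)%N by rewrite (bigD1 j).
have E2 : (\sum_i (if i == j then e i - q else e i) = e j - q + \sum_(i | i != j) e i)%N.
  rewrite (bigD1 j) //= eqxx; congr (_ + _)%N; apply: eq_bigr => i /negbTE -> //.
have E3 : (\sum_i (i == j' : nat) = 1)%N.
  rewrite (bigD1 j') //= eqxx big1 // => i /negbTE -> //.
have [d Hd] : exists d : {ffun 'I_n -> 'I_q}, Pe e' = Pe (fun j => val (d j)).
  apply: IH; rewrite /e' big_split /= E2 E3; move: He; rewrite E1.
  move: Hj; rewrite /=; lia.
exists d; rewrite -Hd; apply/ffunP => x; rewrite !ffunE /e'.
under [in RHS]eq_bigr => i _ do rewrite exprD.
rewrite big_split /= [X in _ = _ * X](bigD1 j') //= eqxx expr1.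
rewrite [X in _ = _ * (_ * X)]big1 ?mulr1; last first.
  by move=> i /negbTE ->; rewrite expr0.
rewrite Hj' (bigD1 j) //= [in RHS](bigD1 j) //= eqxx mulrAC.
rewrite -exprD subnK //; congr (_ * _); apply: eq_bigr => i /negbTE -> //.
Qed.

Lemma char1 (c : {ffun gT -> K}) : is_character c -> c 1%g = 1.
Proof.
move=> [nz hm]; apply: (mulfI (nz 1%g)); rewrite mulr1 -hm mulg1 //.
Qed.

Lemma charX (c : {ffun gT -> K}) x m : is_character c -> c (x ^+ m)%g = c x ^+ m.
Proof.
move=> hc; elim: m => [|m IH]; first by rewrite expg0 expr0 char1.
by rewrite expgS exprS hc.2 IH.
Qed.

Lemma charN (c : {ffun gT -> K}) x : is_character c -> c x ^+ #|gT| = 1.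
Proof.
move=> hc; rewrite -charX // -cardsT expg_cardG ?inE // char1 //.
Qed.

Definition L := map (fun d : {ffun 'I_n -> 'I_q} => Pe (fun j => val (d j))) (enum {ffun 'I_n -> 'I_q}).

Lemma inL e : Pe e \in L.
Proof.
have [d ->] := rep (leqnn (\sum_j e j)).
by apply: map_f; rewrite mem_enum.
Qed.

Lemma inLP c : c \in L -> exists d : {ffun 'I_n -> 'I_q}, c = Pe (fun j => val (d j)).
Proof. by case/mapP => d _ ->; exists d. Qed.

Lemma inv_pow (z : K) N : (0 < N)%N -> z ^+ N = 1 -> z^-1 = z ^+ (N - 1).
Proof.
move=> N0 hz; have nz : z != 0.
  by apply/eqP => z0; move: hz; rewrite z0 expr0n gtn_eqF // => /eqP; rewrite eq_sym oner_eq0.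
apply: (mulfI nz); rewrite mulfV // -exprS -[LHS]hz; congr (_ ^+ _); lia.
Qed.

Lemma gen_in chi : in_gen_subgroup S chi -> chi \in L.
Proof.
move=> hg; apply: (hg (fun c => c \in L)).
- have -> : char_one K gT = Pe (fun _ => 0%N).
    by apply/ffunP => x; rewrite !ffunE big1 // => j _; rewrite expr0.
  exact: inL.
- move=> a b /inLP [d ->] /inLP [d' ->].
  have -> : char_mul (Pe (fun j => val (d j))) (Pe (fun j => val (d' j)))
     = Pe (fun j => (val (d j) + val (d' j))%N).
    by apply/ffunP => x; rewrite !ffunE -big_split /=; apply: eq_bigr => j _; rewrite exprD.
  exact: inL.
- move=> a /inLP [d ->].
  have -> : char_inv (Pe (fun j => val (d j))) = Pe (fun j => (val (d j) * (#|gT| - 1))%N).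
    apply/ffunP => x; rewrite !ffunE -prodfV; apply: eq_bigr => j _.
    rewrite exprM; apply: inv_pow; first by apply/card_gt0P; exists 1%g.
    by rewrite -exprM mulnC exprM charN ?expr1n //; apply: Schar; apply: s_in.
  exact: inL.
- move=> c cS.
  have Hi : (index c S < n)%N by rewrite index_mem.
  have -> : c = Pe (fun j => (j == Ordinal Hi : nat)).
    apply/ffunP => x; rewrite ffunE (bigD1 (Ordinal Hi)) //= eqxx expr1 big1 ?mulr1.
      by rewrite /s /= nth_index.
    by move=> i /negbTE ->; rewrite expr0.
  exact: inL.
Qed.

Lemma size_L : size L = (q ^ n)%N.
Proof. by rewrite size_map -cardE card_ffun !card_ord. Qed.

Lemma bound (l : seq {ffun gT -> K}) : uniq l ->
  (forall chi, chi \in l -> in_gen_subgroup S chi) -> (size l <= q ^ size S)%N.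
Proof.
move=> ul hl; rewrite -size_L; apply: uniq_leq_size => // c /hl; exact: gen_in.
Qed.
End Comb.

Lemma qfrob_bij (K : closedFieldType) p k (pp : prime p) (chRp : p \in [pchar K]) :
  bijective (qfrob k pp chRp : {rmorphism K -> K}).
Proof.
have q0 : (0 < p ^ k)%N by rewrite expn_gt0 prime_gt0.
have ex y : exists x : K, x ^+ (p ^ k) == y.
  have : size ('X^(p ^ k) - y%:P : {poly K}) != 1%N by rewrite size_XnsubC // eqSS -lt0n.
  case/closed_rootP => x; rewrite rootE !hornerE subr_eq0 => hx; by exists x.
exists (fun y => xchoose (ex y)) => [x|y] /=.
  apply: (fmorph_inj (qfrob k pp chRp : {rmorphism K -> K})).
  by rewrite /= {1}/qfrob (eqP (xchooseP (ex _))).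
exact: (eqP (xchooseP (ex y))).
Qed.

Local Close Scope ring_scope.
Unset Implicit Arguments.

Lemma INR_expn a b : INR (a ^ b)%N = pow (INR a) b.
Proof. elim: b => [|b IH]; first by rewrite expn0. by rewrite expnS -multE mult_INR IH. Qed.

Lemma ln_le' x y : Rlt 0 x -> Rle x y -> Rle (ln x) (ln y).
Proof.
move=> x0 [h|->]; last exact: Rle_refl.
by apply: Rlt_le; apply: ln_increasing.
Qed.

Theorem mainTheorem6 (p k : nat) (K : closedFieldType)
  (gT : nat -> finGroupType) (S : forall i : nat, seq {ffun gT i -> K}) (delta : R) :
  prime p -> (p \in [pchar K])%R -> 0 < k ->
  (forall i, abelian [set: gT i]) ->
  (forall i, ~~ (p %| #|gT i|)) ->
  (forall i, uniq (S i)) ->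
  (forall i s, s \in S i -> is_character s) ->
  (forall i, galois_stable (p ^ k) (S i)) ->
  (forall M : nat, exists N : nat, forall i, N <= i -> M <= #|gT i|) ->
  Rlt 0 delta -> Rlt delta 1 ->
  (exists C : R, Rlt 0 C /\ exists N : nat, forall i, N <= i ->
     exists l : seq {ffun gT i -> K},
       uniq l /\ (forall chi, chi \in l -> in_gen_subgroup (S i) chi) /\
       Rle (Rmult C (Rpower (INR #|gT i|) delta)) (INR (size l))) ->
  forall eps : R, Rlt 0 eps ->
    exists C : R, Rlt 0 C /\ exists N : nat, forall i, N <= i ->
      Rle (Rmult C (Rpower (ln (INR #|gT i|)) (Rminus 1 eps))) (INR (size (S i))).
Proof.
Local Open Scope R_scope.
move=> pp chRp k0 _ _ _ Schar Sgal Ginf d0 d1 [C [C0 [N0 HN0]]] eps eps0.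
set q := (p ^ k)%N.
have q1 : (1 < q)%N by rewrite /q -(expn0 p) ltn_exp2l // prime_gt1.
have Sfrob i : forall s, s \in S i -> [ffun x => s x ^+ q]%R \in S i.
  move=> s sS; apply: (Sgal i (qfrob k pp chRp)) => //; exact: qfrob_bij.
have Hb i l : uniq l -> (forall chi, chi \in l -> in_gen_subgroup (S i) chi) ->
    (size l <= q ^ size (S i))%N.
  move=> ul hl; exact: (bound q1 (Schar i) (Sfrob i) ul hl).
have q1R : Rlt 1 (INR q) by apply: (lt_INR 1); apply/ltP.
pose c := ln (INR q).
have c0 : Rlt 0 c by rewrite -ln_1; apply: ln_increasing => //; lra.
pose A := Rmax 1 (2 * Rabs (ln C) / delta).
have [M HM] := INR_unbounded (exp A).
have [N1 HN1] := Ginf M.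
exists (delta / (2 * c)); split.
  apply: Rmult_lt_0_compat => //; apply: Rinv_0_lt_compat; lra.
exists (maxn N0 N1) => i Hi.
have [l [ul [hl Hle]]] := HN0 i (leq_trans (leq_maxl _ _) Hi).
have Hs := Hb i l ul hl.
have G1 : (M <= #|gT i|)%N := HN1 i (leq_trans (leq_maxr _ _) Hi).
move: Hle Hs G1; set G := #|gT i|; set s := size (S i) => Hle Hs G1.
have GM : Rle (INR M) (INR G) by apply: le_INR; apply/leP.
have eA := exp_pos A.
have Gpos : Rlt 0 (INR G) by lra.
have GA : Rlt A (ln (INR G)).
  rewrite -[X in Rlt X _]ln_exp; apply: ln_increasing => //; lra.
have key : Rle (ln C + delta * ln (INR G)) (INR s * c).
  have h1 : Rle (C * Rpower (INR G) delta) (INR (q ^ s)).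
    apply: Rle_trans Hle _; apply: le_INR; apply/leP; exact: Hs.
  have h2 := ln_le' _ _ (Rmult_lt_0_compat _ _ C0 (exp_pos _)) h1.
  move: h2; rewrite ln_mult // ?ln_exp; last exact: exp_pos.
  by rewrite INR_expn ln_pow; last lra.
set Lg := ln (INR G) in GA key *.
have A1 : Rle 1 A by apply: Rmax_l.
have A2 : Rle (2 * Rabs (ln C) / delta) A by apply: Rmax_r.
have hd : Rle (2 * Rabs (ln C)) (delta * Lg).
  have -> : 2 * Rabs (ln C) = (2 * Rabs (ln C) / delta) * delta by field; lra.
  rewrite Rmult_comm; apply: Rmult_le_compat_l; lra.
have habs := Rle_abs (- ln C); rewrite Rabs_Ropp in habs.
have hR : Rle (Rpower Lg (1 - eps)) Lg.
  rewrite -{2}(Rpower_1 Lg); last lra.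
  apply: Rle_Rpower; lra.
apply: (Rmult_le_reg_r (2 * c)); first lra.
have -> : delta / (2 * c) * Rpower Lg (1 - eps) * (2 * c) = delta * Rpower Lg (1 - eps)
  by field; lra.
have : Rle (delta * Rpower Lg (1 - eps)) (delta * Lg) by apply: Rmult_le_compat_l; lra.
lra.
Qed.
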